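(* For every strategy profile $s$ with $S_0(s)\vee S_1(s)$: if $\mathsf{SAcBes}(s)$ then $\Downarrow(s)$.
   Context: Let $P=\{A,B\}$ and $\mathrm{Choice}=\{d,r\}$; a payoff function is $f:P\to\mathbb{R}$. Strategy profiles are elements of the final coalgebra of $X\mapsto\mathbb{R}^P+P\times\mathrm{Choice}\times X\times X$ (finite or infinite trees $\langle f\rangle$ or $\langle p,c,s_d,s_r\rangle$, equality being bisimilarity). Convergence $\downarrow$ is the least predicate with $\downarrow(s)$ iff $s=\langle f\rangle$, or $s=\langle p,d,s_d,s_r\rangle$ and $\downarrow(s_d)$, or $s=\langle p,r,s_d,s_r\rangle$ and $\downarrow(s_r)$. Strong convergence $\Downarrow$ is the greatest predicate with $\Downarrow(s)$ iff $s=\langle f\rangle$, or $s=\langle p,c,s_d,s_r\rangle$ with $\downarrow(s)$, $\Downarrow(s_d)$, $\Downarrow(s_r)$. For a predicate $\Phi$, $\Box\Phi$ is the greatest predicate such that $\Box\Phi(s)$ iff $\Phi(s)$ and, whenever $s=\langle p,c,s_d,s_r\rangle$, $\Box\Phi(s_d)$ and $\Box\Phi(s_r)$. Let $f_{0,1}=(A\mapsto0,B\mapsto1)$ and $f_{1,0}=(A\mapsto1,B\mapsto0)$. $S_0,S_1$ are the greatest predicates with $S_0(s)$ iff $s=\langle A,c,\langle f_{0,1}\rangle,s'\rangle$ with $S_1(s')$, and $S_1(s)$ iff $s=\langle B,c,\langle f_{1,0}\rangle,s'\rangle$ with $S_0(s')$. $\mathsf{AcBes}$ is the least predicate such that $\mathsf{AcBes}(s)$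 holds iff: whenever $s=\langle p,c,\langle f\rangle,s'\rangle$, then ($p=A$, $f=f_{0,1}$, $c=r$, $\mathsf{AcBes}(s')$) or ($p=B$, $f=f_{1,0}$, and ($c=d$ or $\mathsf{AcBes}(s')$)). Finally $\mathsf{SAcBes}=\Box\,\mathsf{AcBes}$. *)

(* Defs.v *)
From Stdlib Require Import Reals.
Open Scope R_scope.

Inductive Agent : Type := A | B.
Inductive Choice : Type := d | r.

(* Final coalgebra of X |-> R^P + P x Choice x X x X *)
CoInductive StratProf : Type :=
| Leaf : (Agent -> R) -> StratProf
| Node : Agent -> Choice -> StratProf -> StratProf -> StratProf.

Inductive Conv : StratProf -> Prop :=
| conv_leaf : forall f, Conv (Leaf f)
| conv_d : forall p sd sr, Conv sd -> Conv (Node p d sd sr)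
| conv_r : forall p sd sr, Conv sr -> Conv (Node p r sd sr).

CoInductive SConv : StratProf -> Prop :=
| sconv_leaf : forall f, SConv (Leaf f)
| sconv_node : forall p c sd sr,
    Conv (Node p c sd sr) -> SConv sd -> SConv sr -> SConv (Node p c sd sr).

CoInductive Always (Phi : StratProf -> Prop) : StratProf -> Prop :=
| always_leaf : forall f, Phi (Leaf f) -> Always Phi (Leaf f)
| always_node : forall p c sd sr,
    Phi (Node p c sd sr) -> Always Phi sd -> Always Phi sr ->
    Always Phi (Node p c sd sr).

Definition f01 : Agent -> R := fun a => match a with A => 0 | B => 1 end.
Definition f10 : Agent -> R := fun a => match a with A => 1 | B => 0 end.

CoInductive S0 : StratProf -> Prop :=
| s0_intro : forall c s', S1 s' -> S0 (Node A c (Leaf f01) s')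
with S1 : StratProf -> Prop :=
| s1_intro : forall c s', S0 s' -> S1 (Node B c (Leaf f10) s').

Inductive AcBes : StratProf -> Prop :=
| acbes_intro : forall s,
    (forall p c f s', s = Node p c (Leaf f) s' ->
       (p = A /\ f = f01 /\ c = r /\ AcBes s') \/
       (p = B /\ f = f10 /\ (c = d \/ AcBes s'))) ->
    AcBes s.

Definition SAcBes : StratProf -> Prop := Always AcBes.

(* Main.v *)
Require Import Defs.

Fixpoint acbes_conv (s : StratProf) (H : AcBes s) {struct H} :
  (S0 s -> Conv s) /\ (S1 s -> Conv s).
Proof.
  destruct H as [s h]. split; intro HS.
  - destruct HS as [c s' H1].
    destruct (h A c f01 s' eq_refl) as [[_ [_ [Hc Ha]]] | [Hp _]].
    + subst c. apply conv_r. exact (proj2 (acbes_conv s' Ha) H1).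
    + discriminate Hp.
  - destruct HS as [c s' H0].
    destruct (h B c f10 s' eq_refl) as [[Hp _] | [_ [_ [Hc | Ha]]]].
    + discriminate Hp.
    + subst c. apply conv_d. constructor.
    + destruct c.
      * apply conv_d. constructor.
      * apply conv_r. exact (proj1 (acbes_conv s' Ha) H0).
Qed.

Theorem mainTheorem8 : forall s : StratProf,
  (S0 s \/ S1 s) -> SAcBes s -> SConv s.
Proof.
  cofix CH. intros s HS HA.
  assert (Hc : Conv s).
  { assert (Ha : AcBes s) by (destruct HA; assumption).
    destruct HS as [K|K];
    [exact (proj1 (acbes_conv _ Ha) K) | exact (proj2 (acbes_conv _ Ha) K)]. }
  destruct HS as [H|H]; destruct H as [c s' H'];
  inversion HA as [|p c0 sd sr Hn Hd Hr]; subst;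
  (apply sconv_node; [exact Hc | apply sconv_leaf | apply CH; [tauto | exact Hr]]).
Qed.
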